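(* Let $b>1$, $p\ge1$ and $R\subseteq\{0,\ldots,p-1\}$ be such that $(p,R)$ is proper, and let $k$ be the greatest divisor of $p$ coprime with $b$. Then the minimisation of $\mathcal{A}_{R,p}$ possesses exactly $k$ states that belong to $0$-circuits.
   Context: $A_b=\{0,\ldots,b-1\}$. $\mathcal{A}_{R,p}$ is the complete deterministic automaton over $A_b$ with states $\{0,\ldots,p-1\}$, initial state $0$, final states $R$, and transitions $n\xrightarrow{a}(nb+a)\bmod p$. $(p,R)$ is proper if $p$ is the smallest period of $R+p\mathbb{N}$, i.e. there are no $1\le p'<p$ and $R'\subseteq\{0,\ldots,p'-1\}$ with $R+p\mathbb{N}=R'+p'\mathbb{N}$. The minimisation of a complete deterministic automaton is the (unique up to isomorphism) complete deterministic automaton with the fewest states accepting the same language. A $0$-circuit is a circuit all of whose transitions are labelled by the digit $0$. *)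

(* Defs.v *)
From mathcomp Require Import all_boot.
Set Implicit Arguments. Unset Strict Implicit. Unset Printing Implicit Defensive.

Record DFA (b : nat) := MkDFA {
  dfa_state :> finType;
  dfa_init : dfa_state;
  dfa_final : pred dfa_state;
  dfa_delta : dfa_state -> 'I_b -> dfa_state
}.

Definition dfa_run b (M : DFA b) (w : seq 'I_b) : dfa_state M :=
  foldl (@dfa_delta b M) (@dfa_init b M) w.

Definition accepts b (M : DFA b) (w : seq 'I_b) : bool :=
  @dfa_final b M (dfa_run M w).

Definition same_language b (M N : DFA b) : Prop :=
  forall w, accepts M w = accepts N w.

Definition is_minimisation b (N M : DFA b) : Prop :=
  same_language M N /\
  forall M' : DFA b, same_language M' N -> #|dfa_state M| <= #|dfa_state M'|.

Definition on_zero_circuit b (M : DFA b) (q : dfa_state M) : Prop :=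
  exists a : 'I_b, val a = 0 /\
    exists n, 0 < n /\ iter n (fun s => @dfa_delta b M s a) q = q.

Definition ARp (b p : nat) (hp : 0 < p) (R : {set 'I_p}) : DFA b :=
  @MkDFA b 'I_p (Ordinal hp) (fun q => q \in R)
    (fun n a => Ordinal (ltn_pmod (n * b + a) hp)).

Definition arith_set (p : nat) (R : {set 'I_p}) (n : nat) : Prop :=
  exists2 r : 'I_p, r \in R & exists m, n = r + p * m.

Definition proper_pair (p : nat) (R : {set 'I_p}) : Prop :=
  ~ exists p' : nat, exists R' : {set 'I_p'},
      [/\ 1 <= p', p' < p & forall n, arith_set R n <-> arith_set R' n].

Definition gdiv_coprime (p b : nat) : nat :=
  \max_(d < p.+1 | (d %| p) && coprime d b) d.

(* Main.v *)
Require Import Defs.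
From mathcomp Require Import all_boot.
From mathcomp Require Import cyclic.
From mathcomp Require Import zify.
From Stdlib Require Import ClassicalEpsilon.

Section Words.
Variable b : nat.
Hypothesis hb : 1 < b.

Definition Fw (s : nat) (w : seq 'I_b) : nat := foldl (fun n (a : 'I_b) => n * b + a) s w.
Definition wval w := Fw 0 w.

Lemma Fw_cat s u v : Fw s (u ++ v) = Fw (Fw s u) v.
Proof. by rewrite /Fw foldl_cat. Qed.

Lemma Fw_rcons s u a : Fw s (rcons u a) = Fw s u * b + a.
Proof. by rewrite -cats1 Fw_cat. Qed.

Lemma Fw_shift s u : Fw s u = s * b ^ size u + wval u.
Proof.
elim/last_ind: u => [|u a IH]; first by rewrite /wval /Fw /= muln1 addn0.
rewrite /wval !Fw_rcons IH size_rcons expnS.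
rewrite mulnDl -addnA; congr (_ + _).
by rewrite -mulnA (mulnC b).
Qed.

Lemma wval_cons a u : wval (a :: u) = a * b ^ size u + wval u.
Proof. by rewrite /wval /Fw /= -/(Fw _ _) Fw_shift. Qed.

Lemma wval_cat u v : wval (u ++ v) = wval u * b ^ size v + wval v.
Proof. by rewrite /wval Fw_cat Fw_shift. Qed.

Lemma wval_nseq0 (a : 'I_b) j : val a = 0 -> wval (nseq j a) = 0.
Proof.
move=> a0; elim: j => [|j IH] //=.
by rewrite wval_cons a0 IH.
Qed.

Lemma exists_word x : exists w : seq 'I_b, wval w = x.
Proof.
have b0 : 0 < b by lia.
elim/ltn_ind: x => x IH.
case: (posnP x) => [->|xpos]; first by exists [::].
have lt : x %/ b < x by rewrite ltn_Pdiv.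
have [w hw] := IH _ lt.
exists (rcons w (Ordinal (ltn_pmod x b0))).
by rewrite /wval Fw_rcons -/(wval w) hw /= -divn_eq.
Qed.

Lemma exists_word_pad x L : exists2 w : seq 'I_b, wval w = x & L <= size w.
Proof.
have b0 : 0 < b by lia.
have [w hw] := exists_word x.
exists (nseq L (Ordinal b0) ++ w); last by rewrite size_cat size_nseq leq_addr.
by rewrite wval_cat wval_nseq0 // mul0n.
Qed.

End Words.
Arguments Fw {b} s w.
Arguments wval {b} w.
Arguments exists_word {b} hb x.
Arguments exists_word_pad {b} hb x L.

Section Periodic.
Variable p : nat.
Hypothesis hp : 0 < p.
Variable R : {set 'I_p}.

Definition om (x : nat) : 'I_p := Ordinal (ltn_pmod x hp).
Definition P x := om x \in R.

Lemma om_mod x y : x %% p = y %% p -> om x = om y.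
Proof. by move=> h; apply: val_inj. Qed.

Lemma P_mod x y : x %% p = y %% p -> P x = P y.
Proof. by move=> h; rewrite /P (om_mod _ _ h). Qed.

Lemma P_ord (r : 'I_p) : P r = (r \in R).
Proof. by rewrite /P; congr (_ \in R); apply: val_inj; rewrite /= modn_small. Qed.

Lemma arith_setP n : arith_set R n <-> P n.
Proof.
split.
  case=> r rR [m ->].
  have -> : P (r + p * m) = P r by apply: P_mod; rewrite addnC mulnC modnMDl.
  by rewrite P_ord.
move=> Pn; exists (om n) => //; exists (n %/ p).
by rewrite /= addnC mulnC -divn_eq.
Qed.

End Periodic.
Arguments om {p} hp x.
Arguments P {p} hp R x.

Lemma arith_set_iff {p} (hp : 0 < p) (R : {set 'I_p}) n : arith_set R n <-> P hp R n.
Proof. exact: arith_setP. Qed.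

Section Proper.
Variable p : nat.
Hypothesis hp : 0 < p.
Variable R : {set 'I_p}.
Hypothesis hprop : proper_pair R.

Lemma period_contra q : 0 < q < p -> (forall y, P hp R (y + q) = P hp R y) -> False.
Proof.
case/andP=> q0 qp hper.
apply: hprop; exists q, [set r : 'I_q | P hp R r]; split => // n.
rewrite (arith_set_iff hp) (arith_set_iff q0) {2}/P in_set /=.
have hm : forall y m, P hp R (y + q * m) = P hp R y.
  by move=> y; elim=> [|m IH]; rewrite ?muln0 ?addn0 // mulnS addnCA addnC hper IH.
by rewrite {1}(divn_eq n q) addnC mulnC hm.
Qed.

End Proper.

Section Main.
Variables b p : nat.
Hypothesis hb : 1 < b.
Hypothesis hp : 0 < p.
Variable R : {set 'I_p}.

Let PP := P hp R.

Lemma acceptsA w : accepts (ARp b hp R) w = PP (wval w).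
Proof.
rewrite /accepts /dfa_run /=.
have -> : Ordinal hp = om hp 0 by apply: val_inj; rewrite /= mod0n.
suff h : forall s, foldl (fun (n : 'I_p) (a : 'I_b) => Ordinal (ltn_pmod (n * b + a) hp)) (om hp s) w
    = om hp (Fw s w) by rewrite h -/(wval w).
elim: w => [|a w IH] s //=.
rewrite -IH; congr foldl; apply: om_mod => /=.
by rewrite -modnDml modnMml modnDml.
Qed.

Definition eqv x y := forall u : seq 'I_b,
  PP (x * b ^ size u + wval u) = PP (y * b ^ size u + wval u).

Lemma eqv_refl x : eqv x x. Proof. by []. Qed.
Lemma eqv_sym {x y} : eqv x y -> eqv y x. Proof. by move=> h u; rewrite h. Qed.
Lemma eqv_trans {x y z} : eqv x y -> eqv y z -> eqv x z.
Proof. by move=> h1 h2 u; rewrite h1 h2. Qed.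

Lemma eqv_mod x y : x %% p = y %% p -> eqv x y.
Proof.
move=> h u; apply: P_mod.
by rewrite -modnDml -modnMml h modnMml modnDml.
Qed.

Lemma eqv_nil x y : eqv x y -> PP x = PP y.
Proof. by move=> /(_ [::]); rewrite /= expn0 !muln1 !addn0. Qed.

Lemma eqv_step x y (a : 'I_b) : eqv x y -> eqv (x * b + a) (y * b + a).
Proof.
move=> h u; have := h (a :: u); rewrite /= wval_cons expnS.
suff e : forall z, z * (b * b ^ size u) + (a * b ^ size u + wval u)
   = (z * b + a) * b ^ size u + wval u by rewrite !e.
by move=> z; rewrite mulnDl addnA mulnA.
Qed.

Definition zero_digit : 'I_b := Ordinal (ltnW hb).

Lemma eqv_mulexp x y j : eqv x y -> eqv (x * b ^ j) (y * b ^ j).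
Proof.
move=> h u; have := h (nseq j zero_digit ++ u).
rewrite wval_cat wval_nseq0 // mul0n add0n size_cat size_nseq expnD.
by rewrite !mulnA.
Qed.

Definition eqvb x y : bool :=
  if excluded_middle_informative (eqv x y) then true else false.

Lemma eqvbP x y : reflect (eqv x y) (eqvb x y).
Proof. by rewrite /eqvb; case: excluded_middle_informative => h; constructor. Qed.

Definition canon (n : 'I_p) : bool := [forall m : 'I_p, (m < n) ==> ~~ eqvb m n].

Definition rep x : 'I_p := [arg min_(m < om hp x | eqvb m x) val m].

Lemma rep_spec x : eqv (rep x) x /\ forall m : 'I_p, eqv m x -> rep x <= m.
Proof.
rewrite /rep; case: arg_minnP.
  by apply/eqvbP; apply: eqv_mod; rewrite /= modn_mod.
move=> i /eqvbP hi hmin; split => // m /eqvbP hm; exact: hmin.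
Qed.

Lemma rep_eqv x : eqv (rep x) x. Proof. by case: (rep_spec x). Qed.

Lemma rep_canon x : canon (rep x).
Proof.
apply/forallP => m; apply/implyP => lt; apply/negP => /eqvbP e.
have [h1 h2] := rep_spec x.
have := h2 m (eqv_trans e h1); rewrite leqNgt lt //.
Qed.

Lemma canon_uniq n m : canon n -> canon m -> eqv n m -> n = m.
Proof.
move=> /forallP cn /forallP cm e; apply: val_inj => /=.
case: (ltngtP n m) => // lt.
  by have := implyP (cm n) lt => /eqvbP; case.
by have := implyP (cn m) lt => /eqvbP; case; apply: eqv_sym.
Qed.

Lemma rep_uniq x y : eqv x y -> rep x = rep y.
Proof.
move=> e; apply: canon_uniq; try exact: rep_canon.
apply: eqv_trans (rep_eqv x) _; apply: eqv_trans e _; apply: eqv_sym; exact: rep_eqv.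
Qed.

Local Notation Nst := {n : 'I_p | canon n}.
Definition toN x : Nst := exist _ (rep x) (rep_canon x).

Definition Ndfa : DFA b :=
  @MkDFA b Nst (toN 0) (fun s => val s \in R) (fun s a => toN (val s * b + a)).

Lemma acceptsN w : accepts Ndfa w = PP (wval w).
Proof.
rewrite /accepts /dfa_run /=.
suff h : forall s, val (foldl (fun (s : Nst) (a : 'I_b) => toN (val s * b + a)) (toN s) w)
   = rep (Fw s w).
  rewrite h -/(wval w) -P_ord; apply: eqv_nil; exact: rep_eqv.
elim: w => [|a w IH] s //=.
rewrite -IH; congr (val (foldl _ _ w)); apply: val_inj => /=.
apply: rep_uniq; apply: eqv_step; exact: rep_eqv.
Qed.


Variable M : DFA b.
Hypothesis hmin : is_minimisation (ARp b hp R) M.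

Lemma acceptsM w : accepts M w = PP (wval w).
Proof. by rewrite hmin.1 acceptsA. Qed.

Lemma exists_wordb x : exists w : seq 'I_b, wval w == x.
Proof. by have [w hw] := exists_word hb x; exists w; apply/eqP. Qed.
Definition wordof x := xchoose (exists_wordb x).
Lemma wordofP x : wval (wordof x) = x.
Proof. exact/eqP/(xchooseP (exists_wordb x)). Qed.

Definition st x : dfa_state M := dfa_run M (wordof x).
Definition fut (q : dfa_state M) (u : seq 'I_b) := dfa_final (foldl (@dfa_delta b M) q u).

Lemma fut_st x u : fut (st x) u = PP (x * b ^ size u + wval u).
Proof.
rewrite /fut /st /dfa_run -foldl_cat -/(dfa_run M _) -/(accepts M _) acceptsM.
by rewrite wval_cat wordofP.
Qed.

Lemma st_eqv_of x y : st x = st y -> eqv x y.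
Proof. by move=> e u; rewrite -!fut_st e. Qed.

Definition iota (s : dfa_state Ndfa) : dfa_state M := st (val (val (s : Nst))).

Lemma iota_inj : injective iota.
Proof.
move=> s1 s2 /st_eqv_of e; apply: val_inj; apply: canon_uniq => //; exact: valP.
Qed.

Lemma iota_onto q : exists s, q = iota s.
Proof.
have c1 : #|dfa_state M| <= #|dfa_state Ndfa|.
  apply: (hmin.2 Ndfa) => w; by rewrite acceptsN acceptsA.
have := inj_card_onto iota_inj c1 q.
by case/codomP=> s ->; exists s.
Qed.

Lemma fut_inj q1 q2 : (forall u, fut q1 u = fut q2 u) -> q1 = q2.
Proof.
have [s1 ->] := iota_onto q1; have [s2 ->] := iota_onto q2.
move=> h; congr iota; apply: val_inj; apply: canon_uniq; try exact: valP.
by move=> u; have := h u; rewrite /iota !fut_st.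
Qed.

Lemma st_eqv x y : eqv x y -> st x = st y.
Proof. by move=> e; apply: fut_inj => u; rewrite !fut_st e. Qed.

Lemma all_st q : exists x, q = st x.
Proof. by have [s ->] := iota_onto q; exists (val (val s)). Qed.

Lemma st_mod x y : x %% p = y %% p -> st x = st y.
Proof. by move=> h; apply: st_eqv; apply: eqv_mod. Qed.

Lemma iter_st (a : 'I_b) j x : val a = 0 ->
  iter j (fun s => @dfa_delta b M s a) (st x) = st (x * b ^ j).
Proof.
move=> a0.
have hit : forall q, iter j (fun s => @dfa_delta b M s a) q = foldl (@dfa_delta b M) q (nseq j a).
  elim: j => [|j IH] q //=.
  by rewrite -IH -iterSr.
apply: fut_inj => u; rewrite hit /fut -foldl_cat -!/(fut _ _) !fut_st.
rewrite wval_cat wval_nseq0 // mul0n add0n size_cat size_nseq expnD.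
by rewrite !mulnA.
Qed.


Hypothesis hprop : proper_pair R.

Definition decb (Q : Prop) : bool := if excluded_middle_informative Q then true else false.
Lemma decbP (Q : Prop) : reflect Q (decb Q).
Proof. by rewrite /decb; case: excluded_middle_informative => h; constructor. Qed.

Let k := gdiv_coprime p b.

Lemma k_spec : [/\ k %| p, coprime k b & forall d', d' %| p -> coprime d' b -> d' <= k].
Proof.
have p1 : 1 < p.+1 by rewrite ltnS.
pose Pk := (fun d : 'I_p.+1 => (d %| p) && coprime d b).
have P1 : Pk (Ordinal p1) by rewrite /Pk /= dvd1n coprime1n.
have E := @bigmax_eq_arg _ (Ordinal p1) Pk (fun d => val d) P1.
split.
- rewrite /k /gdiv_coprime E.
  by case: arg_maxnP => // i /andP[].
- rewrite /k /gdiv_coprime E.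
  by case: arg_maxnP => // i /andP[].
move=> d' dp cb.
have d'p : d' < p.+1 by rewrite ltnS dvdn_leq.
have := @leq_bigmax_cond _ Pk (fun d => val d) (Ordinal d'p); apply.
by rewrite /Pk /= dp cb.
Qed.


Lemma pnat_dvd_exp n : 0 < n -> (forall q, prime q -> q %| n -> q %| b) -> n %| b ^ n.
Proof.
elim/ltn_ind: n => n IH n0 hq.
case: (ltngtP n 1) => [|n1|->]; last by rewrite dvd1n.
  by rewrite ltnS leqn0 => /eqP e; rewrite e in n0.
have qp := pdiv_prime n1.
have qn := pdiv_dvd n.
have q1 := prime_gt1 qp.
set q := pdiv n in qp qn q1.
have mlt : n %/ q < n by rewrite ltn_Pdiv.
have m0 : 0 < n %/ q by rewrite divn_gt0 ?(prime_gt0 qp) // dvdn_leq.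
have := IH _ mlt m0.
have hqm : forall r, prime r -> r %| n %/ q -> r %| b.
  by move=> r rp rd; apply: hq => //; apply: dvdn_trans rd _; apply: dvdn_div.
move=> /(_ hqm) hm.
rewrite -(divnK qn) mulnC.
apply: (@dvdn_trans (b ^ (n %/ q).+1)).
  by rewrite expnS; apply: dvdn_mul => //; apply: hq.
by apply: dvdn_exp2l; nia.
Qed.

Lemma k_pos : 0 < k.
Proof. by have [h _ _] := k_spec; apply: (dvdn_gt0 hp h) . Qed.

Let d := p %/ k.

Lemma p_eq : p = d * k.
Proof. by have [h _ _] := k_spec; rewrite /d divnK. Qed.

Lemma d_pos : 0 < d.
Proof. by have := hp; rewrite p_eq muln_gt0 => /andP[]. Qed.

Lemma d_primes q : prime q -> q %| d -> q %| b.
Proof.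
move=> qp qd; apply/negPn/negP => nqb.
have [kp kb kmax] := k_spec.
have cq : coprime (q * k) b by rewrite coprimeMl kb andbT prime_coprime.
have dq : q * k %| p by rewrite p_eq; apply: dvdn_mul.
have := kmax _ dq cq.
have := prime_gt1 qp; have := k_pos; nia.
Qed.

Lemma d_dvd L : d <= L -> d %| b ^ L.
Proof.
move=> dL; apply: dvdn_trans (@pnat_dvd_exp d d_pos d_primes) _.
by rewrite dvdn_exp2l.
Qed.

Let j := totient k.
Lemma j_pos : 0 < j. Proof. by rewrite totient_gt0 k_pos. Qed.

Lemma bj_mod t : b ^ (j * t) = 1 %[mod k].
Proof.
have [_ kb _] := k_spec.
rewrite expnM -modnXm Euler_exp_totient; last by rewrite coprime_sym.
by rewrite modnXm exp1n.
Qed.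

Lemma mod_fix z t : d <= j * t -> d * z * b ^ (j * t) = d * z %[mod p].
Proof.
move=> dL.
rewrite p_eq -mulnA -!muln_modr -modnMmr bj_mod modnMmr muln1 //.
Qed.


Lemma no_collision (z1 z2 : nat) : z1 < z2 < k -> eqv (d * z1) (d * z2) -> False.
Proof.
case/andP=> z12 z2k e.
have dp := d_pos.
have h1 : d * z1 < d * z2 by rewrite ltn_pmul2l.
have h2 : d * z2 < p by rewrite p_eq ltn_pmul2l.
apply: (@period_contra p hp R hprop (d * z2 - d * z1)).
  apply/andP; split; lia.
move=> y.
pose v := y + p - d * z1.
have [w hw] := exists_word hb v.
pose L := j * (size w + d).
have jp := j_pos.
have sL : size w <= L by rewrite /L; nia.
have dL : d <= j * (size w + d) by nia.
pose u := nseq (L - size w) (zero_digit) ++ w.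
have su : size u = L by rewrite /u size_cat size_nseq subnK.
have wu : wval u = v by rewrite /u wval_cat wval_nseq0 // mul0n add0n.
have := e u; rewrite su wu.
have -> : PP (d * z1 * b ^ L + v) = PP (y + p).
  apply: P_mod; rewrite -modnDml mod_fix // modnDml; congr (_ %% p); rewrite /v; lia.
have -> : PP (d * z2 * b ^ L + v) = PP ((y + (d * z2 - d * z1)) + p).
  apply: P_mod; rewrite -modnDml mod_fix // modnDml; congr (_ %% p); rewrite /v; lia.
have hpp : forall x, PP (x + p) = PP x by move=> x; apply: P_mod; rewrite modnDr.
by rewrite !hpp.
Qed.

Definition fz (z : 'I_k) : dfa_state M := st (d * z).

Lemma fz_inj : injective fz.
Proof.
move=> z1 z2 /st_eqv_of e; apply: val_inj.
case: (ltngtP z1 z2) => // lt.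
- by have := @no_collision z1 z2; rewrite lt ltn_ord => /(_ isT e).
- by have := @no_collision z2 z1; rewrite lt ltn_ord => /(_ isT (eqv_sym e)).
Qed.

Lemma main_count : exists S : {set dfa_state M},
    (forall q, q \in S <-> @on_zero_circuit b M q) /\ #|S| = gdiv_coprime p b.
Proof.
exists [set q | decb (@on_zero_circuit b M q)]; split.
  by move=> q; rewrite in_set; split => /decbP.
have -> : [set q | decb (@on_zero_circuit b M q)] = fz @: [set: 'I_k].
  apply/setP => q; rewrite in_set; apply/decbP/imsetP.
  - case=> a [a0 [n [n0 hn]]].
    have [x ex] := all_st q; subst q.
    rewrite iter_st // in hn.
    have ht : forall t, st (x * b ^ (n * t)) = st x.
      elim=> [|t IH]; first by rewrite muln0 expn0 muln1.
      by rewrite mulnS addnC expnD mulnA -(iter_st a n _ a0) IH iter_st.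
    pose y := x * b ^ (n * d).
    have dy : d %| y by apply: dvdn_mull; apply: d_dvd; rewrite leq_pmull.
    have k0 := k_pos.
    exists (Ordinal (ltn_pmod (y %/ d) k0)); first by rewrite in_setT.
    rewrite /fz -(ht d) -/y; apply: st_mod => /=.
    by rewrite p_eq muln_modr modn_mod [d * (y %/ d)]mulnC divnK.
  - case=> z _ ->; exists zero_digit; split => //; exists (j * d); split.
      by rewrite muln_gt0 j_pos d_pos.
    rewrite /fz iter_st //; apply: st_mod.
    by rewrite mod_fix // leq_pmull // j_pos.
by rewrite card_imset ?cardsT ?card_ord //; exact: fz_inj.
Qed.

End Main.

Theorem proposition23 (b p : nat) (hb : 1 < b) (hp : 0 < p) (R : {set 'I_p}) :
  proper_pair R ->
  forall M : DFA b, is_minimisation (ARp b hp R) M ->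
  exists S : {set dfa_state M},
    (forall q, q \in S <-> @on_zero_circuit b M q) /\ #|S| = gdiv_coprime p b.
Proof.
move=> hprop M hmin.
exact: (@main_count b p hb hp R M hmin hprop).
Qed.
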